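(* Let $\beta,\beta'$ be pseudo-Anosov 3-braids and suppose that for some $l,m\ge1$ the triple-weight train tracks $\mathcal T_l$ (for $\beta$) and $\mathcal T'_m$ (for $\beta'$) have the same 4-ratio. Then for all $t\ge1$, $\mathcal T_{l+t}$ and $\mathcal T'_{m+t}$ have the same 4-ratio, and their 4-tuples have the same type (both Type 1 or both Type 2).
   Context: Identify $B_3$ with the mapping class group of the 3-punctured disk $D_3$. A measured train track on $D_3$ is a smooth graph with trivalent switches where the three edges are tangent, each edge having a positive weight, satisfying at each switch: weight on one side = sum of the two weights on the other side; weights up to scaling. Maximal splitting $\tau\rightharpoonup\tau'$ splits simultaneously along all edges of largest weight (an edge of weight $a+b=c+d$ with neighbouring weights $a,b$ at one end and $c,d$ at the other is replaced by an edge of weight $|c-a|$). The paper fixes measured train tracks $\mathrm M(a,b),\mathrm W(a,b)$ ($a,b>0$) on $D_3$ with six edges and four switches ($\mathrm W(a,b)$ the $180^\circ$ rotation of $\mathrm M(a,b)$). For a pseudo-Anosov 3-braid $\beta$ there is a unique irrational $\alpha\in(0,1)$ (the MP-ratio) such that exactly one of $\mathrm M(1,\alpha),\mathrm M(\alpha,1),\mathrm W(\alpha,1),\mathrm W(1,\alpha)$ is invariant under $\beta$; call it $\tau_0$, let $n=\lfloor1/\alpha\rfloor$ and $\tau_0\rightharpoonup\tau_1\rightharpoonup\cdots$ the maximal splitting sequence. From $\tau_{n+4}$ on all train tracks have exactly three distinct edge weights; set $\mathcal T_k:=\tau_{n+3+k}$ ($k\ge1$). Writing the smallest weight of $\mathcal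 T_k$ as $\tfrac12(x_k+y_k\alpha)$ and the second smallest as $\tfrac12(z_k+w_k\alpha)$ with $x_k,y_k,z_k,w_k\in\mathbb Z$, $(x_k,y_k;z_k,w_k)$ is the 4-tuple and $\frac{x_k+y_k\alpha}{z_k+w_k\alpha}$ the 4-ratio of $\mathcal T_k$. Put $(x_0,y_0;z_0,w_0)=(1,-n;0,1)$. For each $k\ge0$ the 4-tuple of $\mathcal T_{k+1}$ equals either $(z_k-x_k,w_k-y_k;x_k,y_k)$, in which case it is said to be of Type 1, or $(x_k,y_k;z_k-x_k,w_k-y_k)$, in which case it is of Type 2. The same data for $\beta'$ are primed. *)

(* Defs.v *)
From HB Require Import structures.
From mathcomp Require Import all_boot all_order all_algebra.
From mathcomp Require Import reals.
Set Implicit Arguments. Unset Strict Implicit. Unset Printing Implicit Defensive.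
Import Order.TTheory GRing.Theory Num.Theory.
Local Open Scope ring_scope.

Definition tuple4 := (int * int * int * int)%type.

Definition t_x (q : tuple4) : int := q.1.1.1.
Definition t_y (q : tuple4) : int := q.1.1.2.
Definition t_z (q : tuple4) : int := q.1.2.
Definition t_w (q : tuple4) : int := q.2.

Definition type1_step (q : tuple4) : tuple4 :=
  (t_z q - t_x q, t_w q - t_y q, t_x q, t_y q).
Definition type2_step (q : tuple4) : tuple4 :=
  (t_x q, t_y q, t_z q - t_x q, t_w q - t_y q).

Definition irrational (R : realType) (a : R) : Prop :=
  forall p q : int, q != 0 -> a * q%:~R != p%:~R.

(* The data attached to a pseudo-Anosov 3-braid beta via its maximal
   splitting sequence tau_0 ~> tau_1 ~> ...:
   - mp_ratio  : the MP-ratio alpha (irrational, in (0,1)),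
   - nfl       : n = floor (1/alpha),
   - tt_wts k  : for k >= 1, the three distinct edge weights of the
                 triple-weight train track  T_k = tau_{n+3+k}, listed in
                 strictly increasing order (smallest, second smallest, largest),
   - tup k     : the 4-tuple of T_k (k >= 1), with tup 0 = (1,-n;0,1),
                 i.e. smallest weight = (x_k + y_k alpha)/2 and second smallest
                 weight = (z_k + w_k alpha)/2,
   - each 4-tuple of T_{k+1} arises from the previous one by the Type 1 or
     the Type 2 rule. *)
Record braid_split_data (R : realType) := BraidSplitData {
  mp_ratio : R;
  mp_ratio_irr : irrational mp_ratio;
  mp_ratio_gt0 : 0 < mp_ratio;
  mp_ratio_lt1 : mp_ratio < 1;
  nfl : nat;
  nfl_floor : (nfl%:R <= mp_ratio^-1) /\ (mp_ratio^-1 < nfl.+1%:R);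
  tt_wts : nat -> R * R * R;
  tt_wts_sorted : forall k, (1 <= k)%N ->
     0 < (tt_wts k).1.1 /\ (tt_wts k).1.1 < (tt_wts k).1.2 /\
     (tt_wts k).1.2 < (tt_wts k).2;
  tup : nat -> tuple4;
  tup0 : tup 0%N = (1%:Z, - (nfl%:Z), 0%:Z, 1%:Z);
  tup_smallest : forall k, (1 <= k)%N ->
     (tt_wts k).1.1 = ((t_x (tup k))%:~R + (t_y (tup k))%:~R * mp_ratio) / 2;
  tup_second : forall k, (1 <= k)%N ->
     (tt_wts k).1.2 = ((t_z (tup k))%:~R + (t_w (tup k))%:~R * mp_ratio) / 2;
  tup_step : forall k,
     tup k.+1 = type1_step (tup k) \/ tup k.+1 = type2_step (tup k)
}.

Definition four_ratio (R : realType) (D : braid_split_data R) (k : nat) : R :=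
  let q := tup D k in
  ((t_x q)%:~R + (t_y q)%:~R * mp_ratio D) /
  ((t_z q)%:~R + (t_w q)%:~R * mp_ratio D).

Definition is_type1 (R : realType) (D : braid_split_data R) (k : nat) : Prop :=
  tup D k = type1_step (tup D k.-1).
Definition is_type2 (R : realType) (D : braid_split_data R) (k : nat) : Prop :=
  tup D k = type2_step (tup D k.-1).

(* Main.v *)
Require Import Defs.
From HB Require Import structures.
From mathcomp Require Import all_boot all_order all_algebra.
From mathcomp Require Import reals.
From mathcomp Require Import ring lra.
Import Order.TTheory GRing.Theory Num.Theory.
Local Open Scope ring_scope.

Section Aux.
Variable (R : realType).
Implicit Types (D : braid_split_data R).

Definition nm (D : braid_split_data R) k : R :=
  (t_x (tup D k))%:~R + (t_y (tup D k))%:~R * mp_ratio D.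
Definition dn (D : braid_split_data R) k : R :=
  (t_z (tup D k))%:~R + (t_w (tup D k))%:~R * mp_ratio D.

Lemma pos_nm D k : (1 <= k)%N -> 0 < nm D k /\ nm D k < dn D k.
Proof.
move=> hk; have [h1 [h2 _]] := tt_wts_sorted D hk.
rewrite (tup_smallest D hk) (tup_second D hk) in h1 h2.
rewrite /nm /dn; split; lra.
Qed.

Lemma fr_eq D k : four_ratio D k = nm D k / dn D k.
Proof. by []. Qed.

Lemma step1 D k : tup D k.+1 = type1_step (tup D k) ->
  nm D k.+1 = dn D k - nm D k /\ dn D k.+1 = nm D k.
Proof.
move=> e; rewrite /nm /dn e /type1_step /t_x /t_y /t_z /t_w /=.
rewrite !intrB; split; ring.
Qed.

Lemma step2 D k : tup D k.+1 = type2_step (tup D k) ->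
  nm D k.+1 = nm D k /\ dn D k.+1 = dn D k - nm D k.
Proof.
move=> e; rewrite /nm /dn e /type2_step /t_x /t_y /t_z /t_w /=.
rewrite !intrB; split; ring.
Qed.

Lemma cross D D' k k' : (1 <= k)%N -> (1 <= k')%N ->
  (four_ratio D k = four_ratio D' k' <-> nm D k * dn D' k' = nm D' k' * dn D k).
Proof.
move=> hk hk'; have [a b] := pos_nm D k hk; have [a' b'] := pos_nm D' k' hk'.
rewrite !fr_eq; split => h.
- apply/eqP; rewrite -eqr_div; [exact/eqP| |]; apply/lt0r_neq0; lra.
- apply/eqP; rewrite eqr_div; [exact/eqP| |]; apply/lt0r_neq0; lra.
Qed.

Lemma keystep D D' k k' : (1 <= k)%N -> (1 <= k')%N ->
  four_ratio D k = four_ratio D' k' ->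
  four_ratio D k.+1 = four_ratio D' k'.+1 /\
  ((is_type1 D k.+1 /\ is_type1 D' k'.+1) \/
   (is_type2 D k.+1 /\ is_type2 D' k'.+1)).
Proof.
move=> hk hk' /(cross D D' k k' hk hk') e.
have [a b] := pos_nm D k hk; have [a' b'] := pos_nm D' k' hk'.
have [c d] := pos_nm D k.+1 (ltn0Sn k); have [c' d'] := pos_nm D' k'.+1 (ltn0Sn k').
rewrite (cross D D' k.+1 k'.+1 (ltn0Sn k) (ltn0Sn k')).
rewrite /is_type1 /is_type2 /=.
case: (tup_step D k) => t; case: (tup_step D' k') => t'.
- have [e1 e2] := step1 D k t; have [e1' e2'] := step1 D' k' t'.
  split; last by left. rewrite e1 e2 e1' e2'; nra.
- exfalso; have [e1 e2] := step1 D k t; have [e1' e2'] := step2 D' k' t'.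
  rewrite e1 e2 in c d; rewrite e1' e2' in c' d'. nra.
- exfalso; have [e1 e2] := step2 D k t; have [e1' e2'] := step1 D' k' t'.
  rewrite e1 e2 in c d; rewrite e1' e2' in c' d'. nra.
- have [e1 e2] := step2 D k t; have [e1' e2'] := step2 D' k' t'.
  split; last by right. rewrite e1 e2 e1' e2'; nra.
Qed.

End Aux.

Theorem lemma7p3 (R : realType) (D D' : braid_split_data R) (l m : nat) :
  (1 <= l)%N -> (1 <= m)%N ->
  four_ratio D l = four_ratio D' m ->
  forall t : nat, (1 <= t)%N ->
    four_ratio D (l + t) = four_ratio D' (m + t) /\
    ((is_type1 D (l + t) /\ is_type1 D' (m + t)) \/
     (is_type2 D (l + t) /\ is_type2 D' (m + t))).
Proof.
move=> hl hm e.
have L : forall t, (1 <= l + t)%N by move=> t; rewrite addn_gt0 hl.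
have M : forall t, (1 <= m + t)%N by move=> t; rewrite addn_gt0 hm.
have H : forall t, four_ratio D (l + t) = four_ratio D' (m + t).
  elim=> [|t IH]; first by rewrite !addn0.
  rewrite !addnS. exact: (proj1 (keystep R D D' (l+t) (m+t) (L t) (M t) IH)).
case=> [//|t] _; rewrite !addnS.
exact: (keystep R D D' (l+t) (m+t) (L t) (M t) (H t)).
Qed.
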